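(* Let $q:V\to\overline K/\overline R$ be a non-trivial generalized $(\sigma,\varepsilon)$-quadratic form with sesquilinearization $f$, such that $V$ has a basis $E=(e_i)_{i\in I}$ of $q$-singular vectors ($I$ totally ordered). Let $\overline R=\overline S\oplus\overline T$ be a direct sum decomposition of the $K$-vector space $(\overline R,\circ)$. Put $V^{\overline S}=V\oplus\overline S$, $f^{\overline S}(x+\bar r,y+\bar s)=f(x,y)$ and $q_E^{\overline S,\overline T}(x+\bar r)=\overline{g_E(x,x)}+\bar r+\overline T$ for $x,y\in V$, $\bar r,\bar s\in\overline S$. Then $q_E^{\overline S,\overline T}:V^{\overline S}\to\overline K/\overline T$ is a non-trivial generalized $(\sigma,\varepsilon)$-quadratic form whose sesquilinearization is $f^{\overline S}$.
   Context: $K$ division ring, $(\sigma,\varepsilon)$ admissible pair ($\sigma$ anti-automorphism, $\varepsilon^\sigma\varepsilon=1$, $t^{\sigma^2}=\varepsilon t\varepsilon^{-1}$). $K_{\sigma,\varepsilon}=\{t-t^\sigma\varepsilon\}$, $K^{\sigma,\varepsilon}=\{t:t=-t^\sigma\varepsilon\}$, $\overline K=K/K_{\sigma,\varepsilon}$, $\bar t$ class of $t$, $\bar t\circ\lambda=\overline{\lambda^\sigma t\lambda}$; $K^{\sigma,\varepsilon}/K_{\sigma,\varepsilon}$ is a right $K$-vector space under $\circ$, and for non-trivial $q$ the co-defect $\overline R$ is a subspace of it. Closed subgroups: stable under all $\circ\lambda$; $(\bar t+\overline H)\circ\lambda=\bar t\circ\lambda+\overline H$. Generalized $(\sigma,\varepsilon)$-quadratic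 form with co-defect closed $\overline R$: $q:V\to\overline K/\overline R$ ($V$ right $K$-vector space) with $q(x\lambda)=q(x)\circ\lambda$ and trace-valued $(\sigma,\varepsilon)$-sesquilinear $f$ ($f(x\lambda,y\mu)=\lambda^\sigma f(x,y)\mu$, $f(y,x)=f(x,y)^\sigma\varepsilon$, $f(x,x)\in\{t+t^\sigma\varepsilon\}$) with $q(x+y)=q(x)+q(y)+(\overline{f(x,y)}+\overline R)$ (the sesquilinearization). $q$-singular: $q(x)=\overline R$. $g_E(\sum_i e_i\lambda_i,\sum_j e_j\mu_j)=\sum_{i<j}\lambda_i^\sigma f(e_i,e_j)\mu_j$. $V^{\overline S}$ is the direct sum of right $K$-vector spaces, $\overline S$ having scalar multiplication $\circ$. *)

(* Defs.v *)
From HB Require Import structures.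
From mathcomp Require Import all_boot all_order all_algebra.
From Stdlib Require Import ClassicalEpsilon.
Set Implicit Arguments. Unset Strict Implicit. Unset Printing Implicit Defensive.
Import Order.TTheory GRing.Theory.
Local Open Scope ring_scope.

Definition division_ring (K : unitRingType) : Prop :=
  forall x : K, x != 0 -> x \is a GRing.unit.

Definition admissible (K : unitRingType) (sigma : K -> K) (eps : K) : Prop :=
  [/\ (forall a b, sigma (a + b) = sigma a + sigma b),
      (forall a b, sigma (a * b) = sigma b * sigma a),
      sigma 1 = 1 /\ bijective sigma,
      sigma eps * eps = 1 &
      (forall t, sigma (sigma t) = eps * t * eps^-1)].

(* Kbar together with pi : K -> Kbar is the quotient K / K_{sigma,eps}, where
   K_{sigma,eps} = { t - t^sigma eps }; circ is the operation
   pi t o lambda = pi (lambda^sigma t lambda). *)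
Definition quotient_data (K : unitRingType) (sigma : K -> K) (eps : K)
  (Kbar : zmodType) (pi : K -> Kbar) (circ : Kbar -> K -> Kbar) : Prop :=
  [/\ (forall a b, pi (a + b) = pi a + pi b),
      (forall b : Kbar, exists t, pi t = b),
      (forall t, pi t = 0 <-> exists u, t = u - sigma u * eps) &
      (forall t l, circ (pi t) l = pi (sigma l * t * l))].

Definition right_vspace (K : unitRingType) (V : zmodType) (rsc : V -> K -> V)
  : Prop :=
  [/\ (forall x y l, rsc (x + y) l = rsc x l + rsc y l),
      (forall x l m, rsc x (l + m) = rsc x l + rsc x m),
      (forall x l m, rsc x (l * m) = rsc (rsc x l) m) &
      (forall x, rsc x 1 = x)].

Definition closed_subgroup (K : unitRingType) (Kbar : zmodType)
  (circ : Kbar -> K -> Kbar) (H : pred Kbar) : Prop :=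
  [/\ 0 \in H,
      (forall a b, a \in H -> b \in H -> a - b \in H) &
      (forall a l, a \in H -> circ a l \in H)].

Definition trace_valued_sesq (K : unitRingType) (sigma : K -> K) (eps : K)
  (W : zmodType) (D : pred W) (rsc : W -> K -> W) (F : W -> W -> K) : Prop :=
  [/\ (forall x x' y, D x -> D x' -> D y -> F (x + x') y = F x y + F x' y),
      (forall x y y', D x -> D y -> D y' -> F x (y + y') = F x y + F x y'),
      (forall x y l m, D x -> D y -> F (rsc x l) (rsc y m) = sigma l * F x y * m),
      (forall x y, D x -> D y -> F y x = sigma (F x y) * eps) &
      (forall x, D x -> exists t, F x x = t + sigma t * eps)].

(* Generalized (sigma,eps)-quadratic form Q : D -> Kbar / Rb (values given by
   representatives in Kbar, equalities read modulo Rb), with co-defect the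
   closed subgroup Rb and sesquilinearization F. *)
Definition gen_quad_form (K : unitRingType) (sigma : K -> K) (eps : K)
  (Kbar : zmodType) (pi : K -> Kbar) (circ : Kbar -> K -> Kbar)
  (W : zmodType) (D : pred W) (rsc : W -> K -> W)
  (Q : W -> Kbar) (F : W -> W -> K) (Rb : pred Kbar) : Prop :=
  [/\ closed_subgroup circ Rb,
      trace_valued_sesq sigma eps D rsc F,
      (forall x l, D x -> Q (rsc x l) - circ (Q x) l \in Rb) &
      (forall x y, D x -> D y -> Q (x + y) - (Q x + Q y + pi (F x y)) \in Rb)].

Definition nontrivial (Kbar : zmodType) (Rb : pred Kbar) : Prop :=
  exists b, b \notin Rb.

Definition lincomb (K : unitRingType) (V : zmodType) (rsc : V -> K -> V)
  (I : Type) (e : I -> V) (s : seq I) (c : I -> K) : V :=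
  \sum_(i <- s) rsc (e i) (c i).

Definition is_basis (K : unitRingType) (V : zmodType) (rsc : V -> K -> V)
  (I : eqType) (e : I -> V) : Prop :=
  (forall x, exists s c, x = lincomb rsc e s c) /\
  (forall s c, uniq s -> lincomb rsc e s c = 0 -> forall i, i \in s -> c i = 0).

Definition gE_rel (K : unitRingType) (sigma : K -> K) (V : zmodType)
  (rsc : V -> K -> V) (f : V -> V -> K) (d : Order.disp_t) (I : orderType d)
  (e : I -> V) (x y : V) (v : K) : Prop :=
  exists (s : seq I) (c c' : I -> K),
    [/\ uniq s, x = lincomb rsc e s c, y = lincomb rsc e s c' &
        v = \sum_(i <- s) \sum_(j <- s | (i < j)%O) sigma (c i) * f (e i) (e j) * c' j].

Definition gE (K : unitRingType) (sigma : K -> K) (V : zmodType)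
  (rsc : V -> K -> V) (f : V -> V -> K) (d : Order.disp_t) (I : orderType d)
  (e : I -> V) (x y : V) : K :=
  epsilon (inhabits 0) (gE_rel sigma rsc f e x y).

Definition direct_sum_decomp (K : unitRingType) (Kbar : zmodType)
  (circ : Kbar -> K -> Kbar) (Rb Sb Tb : pred Kbar) : Prop :=
  [/\ closed_subgroup circ Sb, closed_subgroup circ Tb,
      (forall b, b \in Sb -> b \in Tb -> b = 0) &
      (forall b, b \in Rb <-> exists s t, [/\ s \in Sb, t \in Tb & b = s + t])].

(* Main.v *)
Require Import Defs.
From HB Require Import structures.
From mathcomp Require Import all_boot all_order all_algebra.
From Stdlib Require Import ClassicalEpsilon.
Import Order.TTheory GRing.Theory.
Set Implicit Arguments. Unset Strict Implicit.
Local Open Scope ring_scope.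


Lemma cs_add (K : unitRingType) (Kbar : zmodType) (circ : Kbar -> K -> Kbar) H a b :
  closed_subgroup circ H -> a \in H -> b \in H -> a + b \in H.
Proof.
case=> H0 HB _ ha hb.
have := HB a (0 - b) ha (HB _ _ H0 hb).
by rewrite sub0r opprK.
Qed.

Lemma cs_opp (K : unitRingType) (Kbar : zmodType) (circ : Kbar -> K -> Kbar) H a :
  closed_subgroup circ H -> a \in H -> - a \in H.
Proof. by case=> H0 HB _ ha; have := HB _ _ H0 ha; rewrite sub0r. Qed.

Lemma rsc0l (K : unitRingType) (V : zmodType) (rsc : V -> K -> V) l :
  right_vspace rsc -> rsc 0 l = 0.
Proof.
case=> A _ _ _; have := A 0 0 l; rewrite addr0 => h.
by apply: (addrI (rsc 0 l)); rewrite addr0 -h.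
Qed.

Lemma rscx0 (K : unitRingType) (V : zmodType) (rsc : V -> K -> V) x :
  right_vspace rsc -> rsc x 0 = 0.
Proof.
case=> _ A _ _; have := A x 0 0; rewrite addr0 => h.
by apply: (addrI (rsc x 0)); rewrite -h addr0.
Qed.

Lemma rscN (K : unitRingType) (V : zmodType) (rsc : V -> K -> V) x l :
  right_vspace rsc -> rsc x (- l) = - rsc x l.
Proof.
move=> RV; case: (RV) => _ A _ _; have := A x l (- l); rewrite subrr rscx0 // => h.
by apply: (addrI (rsc x l)); rewrite -h subrr.
Qed.

Lemma rscB (K : unitRingType) (V : zmodType) (rsc : V -> K -> V) x l m :
  right_vspace rsc -> rsc x (l - m) = rsc x l - rsc x m.
Proof. by move=> RV; case: (RV) => _ A _ _; rewrite A rscN. Qed.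

Lemma rsc_sum (K : unitRingType) (V : zmodType) (rsc : V -> K -> V) (I : Type)
  (s : seq I) (F : I -> V) l :
  right_vspace rsc -> rsc (\sum_(i <- s) F i) l = \sum_(i <- s) rsc (F i) l.
Proof.
move=> RV; case: (RV) => A _ _ _; elim: s => [|i s IH].
  by rewrite !big_nil rsc0l.
by rewrite !big_cons A IH.
Qed.

Lemma sum_sub (R : zmodType) (T : eqType) (s u : seq T) (F : T -> R) :
  uniq s -> uniq u -> {subset s <= u} -> (forall i, i \notin s -> F i = 0) ->
  \sum_(i <- u) F i = \sum_(i <- s) F i.
Proof.
move=> us uu su F0.
rewrite (bigID (fun i => i \in s)) /= [X in _ + X]big1 ?addr0; last by move=> i /F0.
rewrite -big_filter; apply: perm_big; apply: uniq_perm; [by rewrite filter_uniq| by [] |].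
by move=> i; rewrite mem_filter; case: (boolP (i \in s)) => // /su ->.
Qed.

Definition Gs2 (K : unitRingType) (sigma : K -> K) (V : zmodType) (f : V -> V -> K)
  (d : Order.disp_t) (I : orderType d) (e : I -> V) (s : seq I) (a b : I -> K) : K :=
  \sum_(i <- s) \sum_(j <- s | (i < j)%O) sigma (a i) * f (e i) (e j) * b j.

Definition ext (K : unitRingType) (I : eqType) (c : I -> K) (s : seq I) (i : I) : K :=
  if i \in s then c i else 0.

Lemma Gs2_eq (K : unitRingType) (sigma : K -> K) (V : zmodType) (f : V -> V -> K)
  (d : Order.disp_t) (I : orderType d) (e : I -> V) (s : seq I) (a b a' b' : I -> K) :
  {in s, a =1 a'} -> {in s, b =1 b'} -> Gs2 sigma f e s a b = Gs2 sigma f e s a' b'.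
Proof.
move=> Ha Hb; rewrite /Gs2; apply: eq_big_seq => i is_.
rewrite big_seq_cond [RHS]big_seq_cond; apply: eq_bigr => j /andP[js _].
by rewrite Ha // Hb.
Qed.

Lemma Gs2_sub (K : unitRingType) (sigma : K -> K) (V : zmodType) (f : V -> V -> K)
  (d : Order.disp_t) (I : orderType d) (e : I -> V) (s u : seq I) (a b : I -> K) :
  sigma 0 = 0 ->
  uniq s -> uniq u -> {subset s <= u} ->
  (forall i, i \notin s -> a i = 0) -> (forall i, i \notin s -> b i = 0) ->
  Gs2 sigma f e u a b = Gs2 sigma f e s a b.
Proof.
move=> s0 us uu su a0 b0; rewrite /Gs2.
rewrite (sum_sub us uu su); last first.
  by move=> i /a0 ->; rewrite s0; apply: big1 => j _; rewrite !mul0r.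
apply: eq_bigr => i _.
rewrite big_mkcond [RHS]big_mkcond (sum_sub us uu su) //.
by move=> j /b0 ->; rewrite mulr0; case: ifP.
Qed.

Lemma lincomb_sub (K : unitRingType) (V : zmodType) (rsc : V -> K -> V)
  (I : eqType) (e : I -> V) (s u : seq I) (c : I -> K) :
  right_vspace rsc -> uniq s -> uniq u -> {subset s <= u} ->
  lincomb rsc e u (ext c s) = lincomb rsc e s c.
Proof.
move=> RV us uu su; rewrite /lincomb (sum_sub us uu su).
  by apply: eq_big_seq => i is_; rewrite /ext is_.
by move=> i ni; rewrite /ext (negbTE ni) rscx0.
Qed.

Lemma lincombB (K : unitRingType) (V : zmodType) (rsc : V -> K -> V)
  (I : eqType) (e : I -> V) (s : seq I) (c c' : I -> K) :
  right_vspace rsc ->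
  lincomb rsc e s c - lincomb rsc e s c' = lincomb rsc e s (fun i => c i - c' i).
Proof.
by move=> RV; rewrite /lincomb -sumrB; apply: eq_bigr => i _; rewrite rscB.
Qed.

Lemma lincombD (K : unitRingType) (V : zmodType) (rsc : V -> K -> V)
  (I : eqType) (e : I -> V) (s : seq I) (c c' : I -> K) :
  right_vspace rsc ->
  lincomb rsc e s c + lincomb rsc e s c' = lincomb rsc e s (fun i => c i + c' i).
Proof.
by move=> [_ A _ _]; rewrite /lincomb -big_split; apply: eq_bigr => i _; rewrite A.
Qed.

Lemma basis_coef (K : unitRingType) (V : zmodType) (rsc : V -> K -> V)
  (I : eqType) (e : I -> V) (s : seq I) (c c' : I -> K) :
  right_vspace rsc -> is_basis rsc e -> uniq s ->
  lincomb rsc e s c = lincomb rsc e s c' -> {in s, c =1 c'}.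
Proof.
move=> RV [_ B] us h i is_; apply/eqP; rewrite -subr_eq0; apply/eqP.
apply: (B s (fun i => c i - c' i) us _ i is_).
by rewrite -lincombB // h subrr.
Qed.

Lemma Gs_unique (K : unitRingType) (sigma : K -> K) (V : zmodType) (rsc : V -> K -> V)
  (f : V -> V -> K) (d : Order.disp_t) (I : orderType d) (e : I -> V)
  (s s' : seq I) (c c' : I -> K) :
  sigma 0 = 0 -> right_vspace rsc -> is_basis rsc e -> uniq s -> uniq s' ->
  lincomb rsc e s c = lincomb rsc e s' c' ->
  Gs2 sigma f e s c c = Gs2 sigma f e s' c' c'.
Proof.
move=> s0 RV B us us' h.
set u := undup (s ++ s').
have uu : uniq u by apply: undup_uniq.
have su : {subset s <= u} by move=> i is_; rewrite mem_undup mem_cat is_.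
have su' : {subset s' <= u} by move=> i is_; rewrite mem_undup mem_cat is_ orbT.
have E : {in u, ext c s =1 ext c' s'}.
  apply: (basis_coef RV B uu).
  by rewrite (lincomb_sub _ _ RV us uu su) (lincomb_sub _ _ RV us' uu su').
have z1 : forall i, i \notin s -> ext c s i = 0 by move=> i ni; rewrite /ext (negbTE ni).
have z2 : forall i, i \notin s' -> ext c' s' i = 0 by move=> i ni; rewrite /ext (negbTE ni).
transitivity (Gs2 sigma f e s (ext c s) (ext c s)).
  by apply: Gs2_eq => i is_; rewrite /ext is_.
rewrite -(Gs2_sub _ _ s0 us uu su z1 z1) (Gs2_eq _ _ _ E E).
rewrite (Gs2_sub _ _ s0 us' uu su' z2 z2).
by apply: Gs2_eq => i is_; rewrite /ext is_.
Qed.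

Lemma uniq_rep (K : unitRingType) (V : zmodType) (rsc : V -> K -> V)
  (I : eqType) (e : I -> V) (s : seq I) (c : I -> K) :
  right_vspace rsc ->
  exists u c', uniq u /\ lincomb rsc e s c = lincomb rsc e u c'.
Proof.
move=> RV; case: (RV) => _ A _ _.
elim: s => [|i s [u [c' [uu h]]]].
  by exists [::], c.
rewrite /lincomb big_cons -/(lincomb rsc e s c) h.
case: (boolP (i \in u)) => iu.
  exists u, (fun j => if j == i then c i + c' i else c' j); split=> //.
  rewrite /lincomb (bigD1_seq i) //= [in RHS](bigD1_seq i) //= eqxx A -addrA.
  congr (_ + _); congr (_ + _); apply: eq_bigr => j /negbTE ->; done.
exists (i :: u), (fun j => if j == i then c i else c' j); split.
  by rewrite /= iu.
rewrite /lincomb big_cons eqxx; congr (_ + _).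
apply: eq_big_seq => j ju; case: eqP => // ji.
by move: ju; rewrite ji (negbTE iu).
Qed.

Lemma gE_spec (K : unitRingType) (sigma : K -> K) (V : zmodType) (rsc : V -> K -> V)
  (f : V -> V -> K) (d : Order.disp_t) (I : orderType d) (e : I -> V)
  (x : V) (s : seq I) (c : I -> K) :
  sigma 0 = 0 -> right_vspace rsc -> is_basis rsc e -> uniq s ->
  x = lincomb rsc e s c ->
  gE sigma rsc f e x x = Gs2 sigma f e s c c.
Proof.
move=> s0 RV B us hx.
have ex : exists v, gE_rel sigma rsc f e x x v.
  by exists (Gs2 sigma f e s c c), s, c, c.
have := epsilon_spec (inhabits 0) _ ex.
rewrite -/(gE sigma rsc f e x x).
case=> s' [c1 [c2 [us' h1 h2 ->]]].
have E : {in s', c2 =1 c1} by apply: (basis_coef RV B us'); rewrite -h1 -h2.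
rewrite -/(Gs2 sigma f e s' c1 c2) (Gs2_eq _ _ _ (in1W (frefl c1)) E).
apply: (Gs_unique (rsc:=rsc)) => //; by rewrite -h1 -hx.
Qed.

Unset Implicit Arguments.
Set Strict Implicit.

Theorem mainTheorem15 (K : unitRingType) (sigma : K -> K) (eps : K)
  (Kbar : zmodType) (pi : K -> Kbar) (circ : Kbar -> K -> Kbar)
  (V : zmodType) (rsc : V -> K -> V)
  (d : Order.disp_t) (I : orderType d) (e : I -> V)
  (q : V -> Kbar) (f : V -> V -> K) (Rb Sb Tb : pred Kbar) :
  division_ring K ->
  admissible sigma eps ->
  quotient_data sigma eps pi circ ->
  right_vspace rsc ->
  gen_quad_form sigma eps pi circ predT rsc q f Rb ->
  nontrivial Rb ->
  is_basis rsc e ->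
  (forall i, q (e i) \in Rb) ->
  direct_sum_decomp circ Rb Sb Tb ->
  let DS := fun z : V * Kbar => z.2 \in Sb in
  let rscS := fun (z : V * Kbar) (l : K) => (rsc z.1 l, circ z.2 l) in
  let fS := fun z w : V * Kbar => f z.1 w.1 in
  let qS := fun z : V * Kbar => pi (gE sigma rsc f e z.1 z.1) + z.2 in
  gen_quad_form sigma eps pi circ DS rscS qS fS Tb /\ nontrivial Tb.
Proof.
move=> DR [sA sM [s1 sbij] seps ss] [piA pisurj piker pic] RV [RbC TV Qh Qa]
  [b0 nb0] B qe [SC TC STdisj Rdec] DS rscS fS qS.
case: (RV) => rA rA' rM r1.
case: TV => fAl fAr fZ fH fT.
have s0 : sigma 0 = 0.
  by apply: (addrI (sigma 0)); rewrite -sA !addr0.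
have pi0 : pi 0 = 0.
  by apply: (addrI (pi 0)); rewrite -piA !addr0.
have piN : forall a, pi (- a) = - pi a.
  by move=> a; apply: (addrI (pi a)); rewrite -piA !subrr.
have piB : forall a b, pi (a - b) = pi a - pi b by move=> a b; rewrite piA piN.
have circD : forall a b l, circ (a + b) l = circ a l + circ b l.
  move=> a b l; case: (pisurj a) => ta <-; case: (pisurj b) => tb <-.
  by rewrite -piA !pic -piA mulrDr mulrDl.
have piS : forall t, pi (sigma t * eps) = pi t.
  move=> t; apply/eqP; rewrite eq_sym -subr_eq0 -piB; apply/eqP.
  by apply/piker; exists t.
have TR : forall b, b \in Tb -> b \in Rb.
  move=> b bT; apply/Rdec; exists 0, b; split=> //; last by rewrite add0r.
  by case: SC.
have f0l : forall y, f 0 y = 0.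
  by move=> y; apply: (addrI (f 0 y)); rewrite -fAl // !addr0.
have frl : forall x y l, f (rsc x l) y = sigma l * f x y.
  by move=> x y l; rewrite -{1}(r1 y) fZ // mulr1.
have frr : forall x y m, f x (rsc y m) = f x y * m.
  by move=> x y m; rewrite -{1}(r1 x) fZ // s1 mul1r.
have diag : forall i, f (e i) (e i) = 0.
  move=> i; apply/eqP; apply/negPn/negP => nz.
  apply: (negP nb0); case: (pisurj b0) => k <-.
  set dd := (f (e i) (e i))^-1 * k.
  have hk : f (e i) (rsc (e i) dd) = k by rewrite frr /dd mulVKr // DR.
  have inR : forall l, q (rsc (e i) l) \in Rb.
    move=> l; have := Qh (e i) l isT.
    have hc : circ (q (e i)) l \in Rb by case: RbC => _ _; apply; apply: qe.
    move=> h; have := cs_add RbC h hc; by rewrite subrK.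
  have := Qa (e i) (rsc (e i) dd) isT isT.
  rewrite -{1}(r1 (e i)) -rA' hk => h.
  have h2 := cs_add RbC (cs_opp RbC h) (inR (1 + dd)).
  rewrite opprB subrK in h2.
  have h3 := cs_add RbC h2 (cs_opp RbC (cs_add RbC (qe i) (inR dd))).
  by rewrite addrC addKr in h3.
have f0r : forall x, f x 0 = 0.
  by move=> x; apply: (addrI (f x 0)); rewrite -fAr // !addr0.
have fsum_l : forall (s : seq I) a y,
    f (lincomb rsc e s a) y = \sum_(i <- s) sigma (a i) * f (e i) y.
  move=> s a y; rewrite /lincomb; elim: s => [|i s IH]; first by rewrite !big_nil f0l.
  by rewrite !big_cons fAl // frl IH.
have fsum_r : forall (s : seq I) b x,
    f x (lincomb rsc e s b) = \sum_(j <- s) f x (e j) * b j.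
  move=> s b x; rewrite /lincomb; elim: s => [|j s IH]; first by rewrite !big_nil f0r.
  by rewrite !big_cons fAr // frr IH.
have fexp : forall (u : seq I) a b, f (lincomb rsc e u a) (lincomb rsc e u b) =
    \sum_(i <- u) \sum_(j <- u) sigma (a i) * f (e i) (e j) * b j.
  move=> u a b; rewrite fsum_l; apply: eq_bigr => i _.
  rewrite fsum_r mulr_sumr; apply: eq_bigr => j _; by rewrite mulrA.
have epsU : eps \is a GRing.unit.
  apply: DR; apply/eqP => e0; move: seps; rewrite e0 mulr0 => /eqP.
  by rewrite eq_sym oner_eq0.
split; last first.
  by exists b0; apply: contra nb0; apply: TR.
split.
- exact: TC.
- split.
  + by move=> x x' y _ _ _; apply: fAl.
  + by move=> x y y' _ _ _; apply: fAr.
  + by move=> x y l m _ _; apply: fZ.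
  + by move=> x y _ _; apply: fH.
  + by move=> x _; apply: fT.
- move=> [v r] l _; rewrite /qS /rscS /=.
  case: (B) => span _; case: (span v) => s' [c' hv].
  case: (uniq_rep e s' c' RV) => s [c [us hv']]; rewrite hv' in hv.
  have hl : rsc v l = lincomb rsc e s (fun i => c i * l).
    by rewrite hv /lincomb rsc_sum //; apply: eq_bigr => i _; rewrite rM.
  rewrite (@gE_spec _ _ _ _ f _ _ _ _ _ _ s0 RV B us hl) (@gE_spec _ _ _ _ f _ _ _ _ _ _ s0 RV B us hv).
  have -> : Gs2 sigma f e s (fun i => c i * l) (fun i => c i * l) =
      sigma l * Gs2 sigma f e s c c * l.
    rewrite /Gs2 mulr_sumr mulr_suml; apply: eq_bigr => i _.
    rewrite mulr_sumr mulr_suml; apply: eq_bigr => j _; by rewrite sM !mulrA.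
  by rewrite -pic circD subrr; case: TC.
- move=> [v r] [w r'] _ _; rewrite /qS /fS /=.
  case: (B) => span _.
  case: (span v) => s1' [c1' hv]; case: (uniq_rep e s1' c1' RV) => s [c [us hv']].
  rewrite hv' in hv.
  case: (span w) => s2' [c2' hw]; case: (uniq_rep e s2' c2' RV) => s' [c' [us' hw']].
  rewrite hw' in hw.
  set u := undup (s ++ s').
  have uu : uniq u by apply: undup_uniq.
  have su : {subset s <= u} by move=> i is_; rewrite mem_undup mem_cat is_.
  have su' : {subset s' <= u} by move=> i is_; rewrite mem_undup mem_cat is_ orbT.
  set a := ext c s; set b := ext c' s'.
  have hv2 : v = lincomb rsc e u a by rewrite hv (lincomb_sub _ _ RV us uu su).
  have hw2 : w = lincomb rsc e u b by rewrite hw (lincomb_sub _ _ RV us' uu su').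
  have hvw : v + w = lincomb rsc e u (fun i => a i + b i) by rewrite hv2 hw2 lincombD.
  rewrite (@gE_spec _ _ _ _ f _ _ _ _ _ _ s0 RV B uu hvw).
  rewrite (@gE_spec _ _ _ _ f _ _ _ _ _ _ s0 RV B uu hv2).
  rewrite (@gE_spec _ _ _ _ f _ _ _ _ _ _ s0 RV B uu hw2).
  rewrite hv2 hw2 fexp.
  set X := fun (a b : I -> K) (i j : I) => sigma (a i) * f (e i) (e j) * b j.
  have GD : Gs2 sigma f e u (fun i => a i + b i) (fun i => a i + b i) =
      Gs2 sigma f e u a a + Gs2 sigma f e u b b +
      (Gs2 sigma f e u a b + Gs2 sigma f e u b a).
    rewrite /Gs2 -!big_split; apply: eq_bigr => i _; rewrite -!big_split.
    apply: eq_bigr => j _ /=; rewrite sA !mulrDl !mulrDr.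
    by rewrite [sigma (b i) * _ * a j + _]addrC addrACA.
  have FS : \sum_(i <- u) \sum_(j <- u) X a b i j =
      Gs2 sigma f e u a b + \sum_(i <- u) \sum_(j <- u | (j < i)%O) X a b i j.
    rewrite /Gs2 -big_split; apply: eq_bigr => i _ /=.
    rewrite (bigID (fun j => (i < j)%O)) /=; congr (_ + _).
    have Z : \sum_(j <- u | ~~ (i < j)%O && ~~ (j < i)%O) X a b i j = 0.
      apply: big1 => j; case: (ltgtP i j) => //= <- _.
      by rewrite /X diag mulr0 mul0r.
    rewrite (bigID (fun j => (j < i)%O)) /= Z addr0.
    by apply: eq_bigl => j; case: (ltgtP i j).
  have LS : pi (\sum_(i <- u) \sum_(j <- u | (j < i)%O) X a b i j) =
      pi (Gs2 sigma f e u b a).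
    rewrite (exchange_big_dep xpredT) //=.
    rewrite /Gs2 !(big_morph pi piA pi0); apply: eq_bigr => i _.
    rewrite !(big_morph pi piA pi0); apply: eq_bigr => j _.
    rewrite -(piS (sigma (b i) * _ * _)); congr pi.
    rewrite /X !sM ss (fH (e i) (e j)) // !mulrA (mulrVK epsU).
    done.
  have hk : pi (Gs2 sigma f e u (fun i => a i + b i) (fun i => a i + b i)) =
      pi (Gs2 sigma f e u a a) + pi (Gs2 sigma f e u b b) +
      pi (\sum_(i <- u) \sum_(j <- u) X a b i j).
    by rewrite GD FS !piA LS.
  rewrite -/(X a b) hk.
  have E : forall A B C r r' : Kbar, A + B + C + (r + r') - (A + r + (B + r') + C) = 0.
    move=> A B0 C r0 r0'; apply/eqP; rewrite subr_eq0; apply/eqP.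
    rewrite -!addrA; congr (_ + _); rewrite [RHS]addrCA; congr (_ + _).
    by rewrite addrC addrA.
  by rewrite E; case: TC.
Qed.
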